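(* There exists a routing game that is asymptotically well designed (i.e. belongs to AWDG) but is not gaugeable.
   Context: A non-atomic congestion game (NCG) consists of: a finite set $A$ of resources; an integer $K\ge 1$ of user groups; pairwise disjoint finite nonempty sets $\mathcal S_1,\dots,\mathcal S_K$ of strategies, $\mathcal S=\bigcup_{k}\mathcal S_k$ (strategies in $\mathcal S_k$ are available only to group $k$); constants $r(a,s)\ge 0$ ($a\in A$, $s\in\mathcal S$) with $\sum_{a\in A} r(a,s)>0$ for every $s$ and $\sum_{s\in\mathcal S} r(a,s)>0$ for every $a$; continuous nondecreasing consumption price functions $\tau_a:[0,\infty)\to[0,\infty)$; and a user volume vector $d=(d_k)_{k=1}^K\in\mathbb R_{\ge 0}^K$ with total volume $T(d)=\sum_k d_k$. The game structure is fixed while $d$ varies (over all of $\mathbb R^K_{\ge0}$ unless a set of admissible user volume vectors is specified, in which case every quantification over user volume vectors ranges over that set). A feasible profile for $d$ is $f=(f_s)_{s\in\mathcal S}$ with $f_s\ge 0$ and $\sum_{s\in\mathcal S_k} f_s=d_k$ for all $k$; its resource loads are $f_a=\sum_{s} r(a,s)f_s$, strategy prices $\tau_s(f)=\sum_{a} r(a,s)\tau_a(f_a)$, and social cost $C(f)=\sum_a f_a\tau_a(f_a)=\sum_s f_s\tau_s(f)$. $f$ is an NE-profile (Nash equilibrium) if for every $k$ and all $s,s'\in\mathcal S_k$ with $f_s>0$ we have $\tau_s(f)\le\tau_{s'}(f)$; it is an SO-profile if it minimizes $C$ among feasible profiles for $d$. All NE-profiles for a given $d$ have the same cost, as do all SO-profiles.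 The price of anarchy is $\mathrm{PoA}(d)=C(\tilde f)/C(f^* )$ for an NE-profile $\tilde f$ and an SO-profile $f^*$ for $d$ (when $C(f^* )>0$). The game is asymptotically well designed (in AWDG) if $\mathrm{PoA}(d^{(n)})\to 1$ for every sequence of user volume vectors with $T(d^{(n)})\to\infty$. A routing game is an NCG given by a directed graph $G=(V,A)$ whose arcs are the resources, $K$ origin–destination pairs $(o_k,t_k)$, $\mathcal S_k$ the set of directed $o_k$–$t_k$ paths in $G$, $r(a,s)=1$ if arc $a$ lies on path $s$ and $0$ otherwise, $\tau_a$ the travel time function of arc $a$, and $d_k$ the travel demand of pair $k$. A positive function $g$ is regularly varying if $\lim_{t\to\infty} g(tx)/g(t)$ exists and is finite and nonzero for every $x>0$. A routing game is gaugeable if: (G1) there is a regularly varying $g$ such that $c_a:=\lim_{x\to\infty}\tau_a(x)/g(x)\in[0,+\infty]$ exists for every $a\in A$; (G2) $r(a,s)$ is the indicator of $a\in s$; (G3) every group $k$ has a tight strategy, i.e. some $s\in\mathcal S_k$ with $c_s:=\max\{c_a: r(a,s)=1\}<\infty$; (G4) for every sequence of user volume vectors with $T\to\infty$, $\liminf T^{tight}/T>0$, where group $k$ is called tight if $\min_{s\in\mathcal S_k} c_s\in(0,\infty)$ and $T^{tight}=\sum_{k\text{ tight}} d_k$. *)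

(* Defs.v *)
From Stdlib Require Import Bool Reals Lra List Arith Classical ClassicalEpsilon.
Import ListNotations.
Open Scope R_scope.

(* Arcs of a directed graph are pairs (tail, head) of vertices (nat). *)
Definition arc := (nat * nat)%type.

Definition lsum {X : Type} (l : list X) (F : X -> R) : R :=
  fold_right (fun x acc => F x + acc) 0 l.

Fixpoint walk (A : list arc) (u t : nat) (p : list arc) : Prop :=
  match p with
  | nil => u = t
  | (x, y) :: q => x = u /\ In (x, y) A /\ walk A y t q
  end.

Definition simple_path (A : list arc) (o t : nat) (p : list arc) : Prop :=
  walk A o t p /\ NoDup (o :: map snd p).

Definition arc_on (a : arc) (p : list arc) : bool :=
  existsb (fun b => andb (Nat.eqb (fst a) (fst b)) (Nat.eqb (snd a) (snd b))) p.
Definition r (a : arc) (p : list arc) : R := if arc_on a p then 1 else 0.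

(* Strategies of group k are the pairs (k, p) with p an
   element of [paths k], which is required (in [rg_wf]) to enumerate without
   repetition exactly the directed orig k - dest k paths. *)
Record routing_game := {
  arcs : list arc;
  K : nat;
  orig : nat -> nat;
  dest : nat -> nat;
  paths : nat -> list (list arc);
  tau : arc -> R -> R
}.

Definition groups (G : routing_game) : list nat := seq 0 (K G).

Definition cont_on_nonneg (h : R -> R) : Prop :=
  forall x, 0 <= x -> forall eps, eps > 0 -> exists delta, delta > 0 /\
    forall y, 0 <= y -> Rabs (y - x) < delta -> Rabs (h y - h x) < eps.

Definition rg_wf (G : routing_game) : Prop :=
  NoDup (arcs G) /\
  (1 <= K G)%nat /\
  (forall k, (k < K G)%nat ->
     NoDup (paths G k) /\
     (forall p, In p (paths G k) <-> simple_path (arcs G) (orig G k) (dest G k) p)) /\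
  (forall k, (k < K G)%nat -> paths G k <> nil) /\
  (forall k p, (k < K G)%nat -> In p (paths G k) -> lsum (arcs G) (fun a => r a p) > 0) /\
  (forall a, In a (arcs G) ->
     lsum (groups G) (fun k => lsum (paths G k) (fun p => r a p)) > 0) /\
  (forall a, In a (arcs G) ->
     (forall x, 0 <= x -> 0 <= tau G a x) /\
     (forall x y, 0 <= x -> x <= y -> tau G a x <= tau G a y) /\
     cont_on_nonneg (tau G a)).

(* user volume vectors d : nat -> R (only d k, k < K, matter);
   flow profiles f : nat -> list arc -> R, f k p = flow of group k on path p *)
Definition volume_vector (G : routing_game) (d : nat -> R) : Prop :=
  forall k, (k < K G)%nat -> 0 <= d k.

Definition total (G : routing_game) (d : nat -> R) : R := lsum (groups G) d.

Definition feasible (G : routing_game) (d : nat -> R) (f : nat -> list arc -> R) : Prop :=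
  (forall k p, 0 <= f k p) /\
  (forall k, (k < K G)%nat -> lsum (paths G k) (f k) = d k).

Definition load (G : routing_game) (f : nat -> list arc -> R) (a : arc) : R :=
  lsum (groups G) (fun k => lsum (paths G k) (fun p => r a p * f k p)).

Definition strat_price (G : routing_game) (f : nat -> list arc -> R) (p : list arc) : R :=
  lsum (arcs G) (fun a => r a p * tau G a (load G f a)).

Definition cost (G : routing_game) (f : nat -> list arc -> R) : R :=
  lsum (arcs G) (fun a => load G f a * tau G a (load G f a)).

Definition is_NE (G : routing_game) (d : nat -> R) (f : nat -> list arc -> R) : Prop :=
  feasible G d f /\
  forall k p p', (k < K G)%nat -> In p (paths G k) -> In p' (paths G k) ->
    f k p > 0 -> strat_price G f p <= strat_price G f p'.

Definition is_SO (G : routing_game) (d : nat -> R) (f : nat -> list arc -> R) : Prop :=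
  feasible G d f /\ forall h, feasible G d h -> cost G f <= cost G h.

(* Asymptotically well designed: PoA(d^(n)) -> 1 whenever T(d^(n)) -> oo
   (PoA being defined, i.e. C(SO) > 0, for all large n). *)
Definition AWDG (G : routing_game) : Prop :=
  forall (d : nat -> nat -> R) (fne fso : nat -> nat -> list arc -> R),
    (forall n, volume_vector G (d n)) ->
    cv_infty (fun n => total G (d n)) ->
    (forall n, is_NE G (d n) (fne n)) ->
    (forall n, is_SO G (d n) (fso n)) ->
    (exists N, forall n, (N <= n)%nat -> cost G (fso n) > 0) /\
    Un_cv (fun n => cost G (fne n) / cost G (fso n)) 1.

Definition lim_at_infty (h : R -> R) (L : R) : Prop :=
  forall eps, eps > 0 -> exists M, forall t, t > M -> Rabs (h t - L) < eps.
Definition to_infty (h : R -> R) : Prop :=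
  forall B, exists M, forall t, t > M -> h t > B.

Definition regularly_varying (g : R -> R) : Prop :=
  (forall x, 0 < x -> 0 < g x) /\
  forall x, 0 < x -> exists L, L <> 0 /\ lim_at_infty (fun t => g (t * x) / g t) L.

(* extended nonnegative reals [0,+oo]: Some v = v, None = +oo *)
Definition ext_val (c : option R) : R := match c with Some v => v | None => 0 end.

(* c_s = max { c_a : a on s } (tight case: all c_a finite, nonnegative) *)
Definition tight_strategy (G : routing_game) (c : arc -> option R) (p : list arc) : Prop :=
  forall a, arc_on a p = true -> c a <> None.
Definition c_strat (c : arc -> option R) (p : list arc) : R :=
  fold_right (fun a m => Rmax (ext_val (c a)) m) 0 p.

(* group k tight: min_s c_s in (0,oo) *)
Definition tight_group (G : routing_game) (c : arc -> option R) (k : nat) : Prop :=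
  (exists p, In p (paths G k) /\ tight_strategy G c p) /\
  (forall p, In p (paths G k) -> tight_strategy G c p -> c_strat c p > 0).

Definition T_tight (G : routing_game) (c : arc -> option R) (d : nat -> R) : R :=
  lsum (groups G) (fun k =>
    if excluded_middle_informative (tight_group G c k) then d k else 0).

Definition gaugeable (G : routing_game) : Prop :=
  exists (g : R -> R) (c : arc -> option R),
    regularly_varying g /\
    (forall a, In a (arcs G) ->
       match c a with
       | Some v => lim_at_infty (fun x => tau G a x / g x) v
       | None => to_infty (fun x => tau G a x / g x)
       end) /\
    (* G2 holds by construction (r is the arc-path indicator) *)
    (forall k, (k < K G)%nat -> exists p, In p (paths G k) /\ tight_strategy G c p) /\
    (forall d : nat -> nat -> R,
       (forall n, volume_vector G (d n)) ->
       cv_infty (fun n => total G (d n)) ->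
       exists eps, eps > 0 /\ exists N, forall n, (N <= n)%nat ->
         eps <= T_tight G c (d n) / total G (d n)).

(* Main.v *)
Require Import Defs.
From Stdlib Require Import Reals Lra Lia List Arith Classical ClassicalEpsilon.
Import ListNotations.
Open Scope R_scope.

Definition G0 : routing_game := {|
  arcs := [(0%nat,1%nat)];
  K := 1%nat;
  orig := fun _ => 0%nat;
  dest := fun _ => 1%nat;
  paths := fun _ => [[(0%nat,1%nat)]];
  tau := fun _ x => exp x |}.

Lemma divmul x y : y > 0 -> x = (x / y) * y.
Proof. intros; field; lra. Qed.

Lemma core (g : R -> R) (v : R) :
  (forall x, 0 < x -> 0 < g x) ->
  (exists L, L <> 0 /\ lim_at_infty (fun t => g (t * 2) / g t) L) ->
  v > 0 -> lim_at_infty (fun x => exp x / g x) v -> False.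
Proof.
  intros Hg [L [_ HL]] Hv Hl.
  destruct (Hl (v/2) ltac:(lra)) as [M1 H1].
  destruct (HL 1 ltac:(lra)) as [M2 H2].
  set (Kb := Rabs L + 1).
  set (t := Rmax (Rmax M1 M2) (Rmax 1 (3 * Kb + 1))).
  assert (Ht1 : t >= M1 /\ t >= M2 /\ t >= 1 /\ t >= 3*Kb+1).
  { pose proof (Rmax_l (Rmax M1 M2) (Rmax 1 (3 * Kb + 1))).
    pose proof (Rmax_r (Rmax M1 M2) (Rmax 1 (3 * Kb + 1))).
    pose proof (Rmax_l M1 M2). pose proof (Rmax_r M1 M2).
    pose proof (Rmax_l 1 (3 * Kb + 1)). pose proof (Rmax_r 1 (3 * Kb + 1)).
    fold t in H, H0. lra. }
  destruct Ht1 as [A1 [A2 [A3 A4]]].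
  assert (t > M1 + 0 \/ t = M1) by lra.
  (* use t+1 to get strictness *)
  set (s := t + 1).
  assert (s > M1) by (unfold s; lra).
  assert (s > M2) by (unfold s; lra).
  assert (s*2 > M1) by (unfold s; lra).
  assert (s > 0) by (unfold s; lra).
  assert (gs := Hg s ltac:(lra)).
  assert (gs2 := Hg (s*2) ltac:(lra)).
  specialize (H1 s ltac:(assumption)) as B1.
  specialize (H1 (s*2) ltac:(assumption)) as B2.
  specialize (H2 s ltac:(assumption)) as B3.
  apply Rabs_def2 in B1, B2, B3.
  assert (RL : L <= Rabs L) by apply Rle_abs.
  set (a := exp s) in *. set (b := exp (s*2)) in *.
  set (q1 := a / g s) in *. set (q2 := b / g (s*2)) in *.
  set (q3 := g (s*2) / g s) in *.
  assert (Ea : a = q1 * g s) by (apply divmul; lra).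
  assert (Eb : b = q2 * g (s*2)) by (apply divmul; lra).
  assert (E3 : g (s*2) = q3 * g s) by (apply divmul; lra).
  assert (Eab : b = a * a) by (unfold a, b; rewrite <- exp_plus; f_equal; ring).
  assert (Ha : a >= 1 + s) by (unfold a; apply Rle_ge, exp_ineq1_le).
  assert (q3 < Kb) by (unfold Kb; lra).
  assert (q2 < 3*v/2) by lra.
  assert (q1 > v/2) by lra.
  (* a*a = q2*q3*gs, a = q1 gs, so a = q2*q3/q1 < 3 Kb *)
  assert (a * a * q1 = q2 * q3 * a).
  { rewrite <- Eab, Eb, E3, Ea. ring. }
  assert (a * q1 = q2 * q3).
  { apply (Rmult_eq_reg_r a); [|lra]. lra. }
  assert (q3 > 0).
  { unfold q3. apply Rdiv_lt_0_compat; lra. }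
  assert (a * q1 < 3 * Kb * q1) by nra.
  assert (a < 3 * Kb) by nra.
  unfold s in Ha. lra.
Qed.

Lemma cost_G0 f : cost G0 f = f 0%nat [(0%nat,1%nat)] * exp (f 0%nat [(0%nat,1%nat)]).
Proof. unfold cost, load, lsum, r, arc_on; simpl. rewrite !Rplus_0_r, Rmult_1_l. reflexivity. Qed.

Theorem theorem1 :
  exists G : routing_game, rg_wf G /\ AWDG G /\ ~ gaugeable G.
Proof.
  exists G0. split; [|split].
  - unfold rg_wf; simpl. split; [constructor; [simpl; tauto|constructor]|].
    split; [lia|]. split; [|split; [|split; [|split]]].
    + intros k Hk. split; [constructor; [simpl; tauto|constructor]|].
      intros p; split.
      * intros [<-|[]]. split; simpl; [tauto|].
        constructor; [simpl; intuition lia|constructor; [simpl; tauto|constructor]].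
      * intros [Hw _]. destruct p as [|[x y] q]; simpl in Hw; [lia|].
        destruct Hw as [-> [[E|[]] Hw]]. inversion E; subst.
        destruct q as [|[x' y'] q']; [left; reflexivity|].
        simpl in Hw. destruct Hw as [-> [[E'|[]] _]]. inversion E'.
    + intros k _ H; discriminate.
    + intros k p _ [<-|[]]. unfold lsum, r, arc_on; simpl; lra.
    + intros a [<-|[]]. unfold lsum, groups, r, arc_on; simpl; lra.
    + intros a _. split; [intros; left; apply exp_pos|split].
      * intros x y _ Hxy. destruct Hxy as [H|H]; [left; apply exp_increasing; auto|subst; lra].
      * intros x _ eps Heps.
        destruct (derivable_continuous exp derivable_exp x eps Heps) as [dl [Hd Hd2]].
        exists dl. split; [auto|]. intros y _ Hy.
        destruct (Req_dec y x) as [->|Hne].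
        { unfold Rminus. rewrite Rplus_opp_r, Rabs_R0. lra. }
        apply (Hd2 y). split; [split; [exact I| auto]|exact Hy].
  - intros d fne fso Hv Hcv Hne Hso.
    assert (Hc : forall n f, feasible G0 (d n) f -> cost G0 f = d n 0%nat * exp (d n 0%nat)).
    { intros n f [_ Hf]. rewrite cost_G0. specialize (Hf 0%nat ltac:(simpl; lia)).
      unfold lsum in Hf; simpl in Hf. rewrite Rplus_0_r in Hf. rewrite Hf. reflexivity. }
    destruct (Hcv 0) as [N HN].
    assert (Hpos : forall n, (n >= N)%nat -> cost G0 (fso n) > 0).
    { intros n Hn. rewrite (Hc n _ (proj1 (Hso n))). specialize (HN n Hn).
      unfold total, lsum in HN; simpl in HN. rewrite Rplus_0_r in HN.
      apply Rmult_lt_0_compat; [lra|apply exp_pos]. }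
    split; [exists N; intros n Hn; apply Hpos; lia|].
    intros eps Heps. exists N. intros n Hn.
    rewrite (Hc n _ (proj1 (Hne n))). rewrite <- (Hc n _ (proj1 (Hso n))).
    unfold Rdist, Rdiv. rewrite Rinv_r; [|specialize (Hpos n Hn); lra].
    unfold Rminus. rewrite Rplus_opp_r, Rabs_R0. lra.
  - intros [g [c [[Hg Hrv] [Hlim [HG3 HG4]]]]].
    destruct (HG4 (fun n _ => INR n)) as [eps [Heps [N HN]]].
    + intros n k _. apply pos_INR.
    + intros M. destruct (INR_archimed 1 M ltac:(lra)) as [N HN].
      exists N. intros n Hn. unfold total, lsum; simpl. rewrite Rplus_0_r.
      apply le_INR in Hn. lra.
    + specialize (HN (S N) ltac:(lia)).
      assert (HT : INR (S N) > 0) by (apply lt_0_INR; lia).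
      unfold T_tight, total, lsum in HN; simpl in HN.
      destruct (excluded_middle_informative (tight_group G0 c 0%nat)) as [Ht|Ht].
      2: { rewrite Rplus_0_r in HN. unfold Rdiv in HN. rewrite Rmult_0_l in HN. lra. }
      destruct Ht as [[p [Hp Htp]] Hpos].
      specialize (Hpos p Hp Htp). simpl in Hp. destruct Hp as [<-|[]].
      assert (Hca : c (0%nat,1%nat) <> None) by (apply Htp; reflexivity).
      specialize (Hlim (0%nat,1%nat) (or_introl eq_refl)).
      unfold c_strat in Hpos; simpl in Hpos.
      destruct (c (0%nat,1%nat)) as [v|]; [|congruence].
      simpl in Hpos, Hlim.
      assert (v > 0).
      { unfold Rmax in Hpos. destruct (Rle_dec v 0); lra. }
      apply (core g v Hg (Hrv 2 ltac:(lra)) H Hlim).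
Qed.
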